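(* For every $w\in F$, the edge $e_0(w)$ is a good edge.
   Context: $F$ is Thompson's group with generators $x_0,x_1$ and $X^1$ its Cayley graph with respect to $\{x_0^{\pm1},x_1^{\pm1}\}$. Elements are represented by reduced tree pair diagrams $(T_-(w),T_+(w))$ of finite rooted binary trees with equally many carets (caret: vertex with its two downward edges), carets numbered in infix order from 1. A caret is a right (left) caret if one of its edges lies on the right (left) side of the tree; the root is both; others are interior. Nested traversal word $\gamma(T)$: go through carets of $T$ in infix order, skipping carets in the right subtree of a caret to which rule (3) or (5) has been applied, appending (1) nothing for caret 1; (2) $x_0^{-1}$ for a left caret numbered $>1$; (3) $x_0^{-1}\gamma(T')x_0x_1^{-1}$ for an interior caret with nonempty right subtree $T'$ (as a tree on its own); (4) $x_1^{-1}$ for an interior caret with empty right subtree; (5) $x_0^{-1}\gamma(T')x_0$ for a non-root right caret whose right subtree $T'$ contains an interior caret; (6) nothing for a non-root right caret whose right subtree has no interior caret. The nested traversal normal form $\eta(w)$ is the free reduction of $\gamma(T_+(w))^{-1}\gamma(T_-(w))$, and $\Psi_w$ is the path in $X^1$ from the identity to $w$ labelled $\eta(w)$. For $a\in\{0,1\}$, $e_a(w)$ is the edge with endpoints $w$ and $wx_a^{-1}$; it is good if the loop $\Psi_w\,e_a(w)\,\Psi_{wx_a^{-1}}^{-1}$ is null-homotopic in $X^1$. *)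

(* Defs.v *)
From Stdlib Require Import List Arith Bool Relations.
Import ListNotations.

Inductive tree : Type := Lf | Nd (l r : tree).

Fixpoint carets (t : tree) : nat :=
  match t with Lf => 0 | Nd a b => S (carets a + carets b) end.

Fixpoint leaves (t : tree) : nat :=
  match t with Lf => 1 | Nd a b => leaves a + leaves b end.

Definition treepair := (tree * tree)%type.

(* leaf indices i (from base) such that leaves i, i+1 form a caret (exposed caret) *)
Fixpoint exposed (t : tree) (base : nat) : list nat :=
  match t with
  | Lf => []
  | Nd Lf Lf => [base]
  | Nd a b => exposed a base ++ exposed b (base + leaves a)
  end.

Fixpoint contract (t : tree) (i base : nat) : tree :=
  match t with
  | Lf => Lf
  | Nd Lf Lf => if Nat.eqb base i then Lf else t
  | Nd a b => Nd (contract a i base) (contract b i (base + leaves a))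
  end.

Definition common_caret (p : treepair) : option nat :=
  let e2 := exposed (snd p) 0 in
  find (fun i => existsb (Nat.eqb i) e2) (exposed (fst p) 0).

Definition is_reduced (p : treepair) : bool :=
  match common_caret p with None => true | Some _ => false end.

Fixpoint reduce_fuel (fuel : nat) (p : treepair) : treepair :=
  match fuel with
  | 0 => p
  | S f => match common_caret p with
           | None => p
           | Some i => reduce_fuel f (contract (fst p) i 0, contract (snd p) i 0)
           end
  end.

Definition reduce (p : treepair) : treepair := reduce_fuel (carets (fst p)) p.

(* a reduced tree pair diagram: the canonical representative of an element of F *)
Definition is_elt (p : treepair) : Prop :=
  carets (fst p) = carets (snd p) /\ is_reduced p = true.

Fixpoint join (s t : tree) : tree :=
  match s, t with
  | Lf, _ => t
  | _, Lf => s
  | Nd a b, Nd c d => Nd (join a c) (join b d)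
  end.

(* for s a subtree of u (sharing the root): the subtrees of u hanging at the
   leaves of s, in left-to-right order *)
Fixpoint diff (s u : tree) : list tree :=
  match s, u with
  | Lf, _ => [u]
  | Nd _ _, Lf => []
  | Nd a b, Nd c d => diff a c ++ diff b d
  end.

Fixpoint graft (t : tree) (l : list tree) : tree * list tree :=
  match t with
  | Lf => match l with [] => (Lf, []) | s :: l' => (s, l') end
  | Nd a b => let (a', l1) := graft a l in
              let (b', l2) := graft b l1 in (Nd a' b', l2)
  end.

(* The diagram (T_-, T_+) is the PL map sending the i-th leaf interval of T_-
   onto the i-th leaf interval of T_+; the product a * b is the composite
   "first b, then a".  With the generators below this is the convention in which the path
   labelled eta(w) from 1 ends at w (as the paper requires). *)
Definition mul (a b : treepair) : treepair :=
  let U := join (snd b) (fst a) in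
  reduce (fst (graft (fst b) (diff (snd b) U)),
          fst (graft (snd a) (diff (fst a) U))).

Definition one : treepair := (Lf, Lf).

Inductive gen : Type := g0 | g1.

(* a letter (g, true) is x_g, and (g, false) is x_g^{-1} *)
Definition letter := (gen * bool)%type.

Definition gen_eqb (a b : gen) : bool :=
  match a, b with g0, g0 | g1, g1 => true | _, _ => false end.

Definition letter_inv (l : letter) : letter := (fst l, negb (snd l)).
Definition letter_eqb (l m : letter) : bool :=
  gen_eqb (fst l) (fst m) && Bool.eqb (snd l) (snd m).

Definition gen_elt (g : gen) : treepair :=
  match g with
  | g0 => (Nd Lf (Nd Lf Lf), Nd (Nd Lf Lf) Lf)
  | g1 => (Nd Lf (Nd Lf (Nd Lf Lf)), Nd Lf (Nd (Nd Lf Lf) Lf))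
  end.

Definition letter_elt (l : letter) : treepair :=
  if snd l then gen_elt (fst l) else let (m, p) := gen_elt (fst l) in (p, m).

Definition word := list letter.

Definition inv_word (w : word) : word := rev (map letter_inv w).

Definition fred_step (acc : word) (x : letter) : word :=
  match acc with
  | y :: acc' => if letter_eqb y (letter_inv x) then acc' else x :: acc
  | [] => [x]
  end.
Definition free_reduce (w : word) : word := rev (fold_left fred_step w []).

Definition x0 : letter := (g0, true).
Definition x0i : letter := (g0, false).
Definition x1i : letter := (g1, false).

(* Carets of a subtree all of whose carets are interior carets of T, traversed
   in infix order: rule (4) for an interior caret with empty right subtree,
   rule (3) for one with nonempty right subtree T' (whose carets are then
   skipped by the outer traversal and traversed inside the conjugate). *)
Fixpoint trav_int (t : tree) : word :=
  match t with
  | Lf => []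
  | Nd a b =>
      trav_int a ++
      match b with
      | Lf => [x1i]
      | _ => [x0i] ++ trav_int b ++ [x0; x1i]
      end
  end.

(* does a subtree hanging on the right side of T contain an interior caret? *)
Fixpoint has_interior_R (t : tree) : bool :=
  match t with
  | Lf => false
  | Nd Lf b => has_interior_R b
  | Nd _ _ => true
  end.

(* a subtree whose root is a non-root right caret of T (its right-spine carets
   are right carets of T, all other carets interior) *)
Fixpoint trav_right (t : tree) : word :=
  match t with
  | Lf => []
  | Nd a b =>
      trav_int a ++
      (if has_interior_R b
       then [x0i] ++ trav_right b ++ [x0]
       else [])                                (* rule (6); b then has only right carets, all rule (6) *)
  end.

(* a subtree whose root is a non-root left caret of T (left-spine carets are
   left carets of T, all other carets interior) *)
Fixpoint trav_left (t : tree) : word :=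
  match t with
  | Lf => []
  | Nd a b =>
      trav_left a ++
      (match a with Lf => [] | _ => [x0i] end) ++
      trav_int b
  end.

Definition gamma (t : tree) : word :=
  match t with
  | Lf => []
  | Nd a b =>
      trav_left a ++
      (match a with Lf => [] | _ => [x0i] end) ++
      trav_right b
  end.

Definition eta (w : treepair) : word :=
  free_reduce (inv_word (gamma (snd w)) ++ gamma (fst w)).

Definition adj (u v : treepair) : Prop := exists l : letter, v = mul u (letter_elt l).

Fixpoint walk (v : treepair) (w : word) : list treepair :=
  v :: match w with [] => [] | l :: w' => walk (mul v (letter_elt l)) w' end.

Definition Psi (w : treepair) : list treepair := walk one (eta w).

(* elementary homotopy of edge paths (given by vertex sequences; X^1 has no
   multiple edges): deleting/inserting a backtrack u - v - u *)
Definition backtrack (p q : list treepair) : Prop :=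
  exists l1 l2 u v, adj u v /\ p = l1 ++ u :: v :: u :: l2 /\ q = l1 ++ u :: l2.

(* a loop based at its first vertex is null-homotopic in X^1 iff it is
   (combinatorially) homotopic rel basepoint to the constant path *)
Definition nullhomotopic (p : list treepair) : Prop :=
  clos_refl_sym_trans _ backtrack p [hd one p].

(* e_a(w) joins w and w x_a^{-1}; it is good iff Psi_w e_a(w) Psi_{w x_a^{-1}}^{-1}
   is a null-homotopic loop (the first two conjuncts say the paths end where
   they must, so that this concatenation is the loop in question). *)
Definition good_edge (w : treepair) (a : gen) : Prop :=
  let w' := mul w (letter_elt (a, false)) in
  last (Psi w) one = w /\ last (Psi w') one = w' /\
  nullhomotopic (Psi w ++ rev (Psi w')).

(* Main.v *)
Require Import Defs.
From Stdlib Require Import List Arith Bool Relations Lia FunctionalExtensionality.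
Import ListNotations.

Definition stream := nat -> bool.
Definition scons (b:bool) (s:stream) : stream := fun n => match n with 0 => b | S k => s k end.
Definition stl (s:stream) : stream := fun n => s (S n).

Lemma scons_eta s : scons (s 0) (stl s) = s.
Proof. apply functional_extensionality; intros [|n]; reflexivity. Qed.

Lemma scons_inj b c s t : scons b s = scons c t -> b = c /\ s = t.
Proof. intro H. split. exact (f_equal (fun f => f 0) H).
  apply functional_extensionality; intro n. exact (f_equal (fun f => f (S n)) H). Qed.

Fixpoint locate (t : tree) (s : stream) : nat * stream :=
  match t with
  | Lf => (0, s)
  | Nd a b => if s 0 then (leaves a + fst (locate b (stl s)), snd (locate b (stl s)))
              else locate a (stl s)
  end.

Fixpoint place (t : tree) (i : nat) (r : stream) : stream :=
  match t with
  | Lf => r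
  | Nd a b => if i <? leaves a then scons false (place a i r)
              else scons true (place b (i - leaves a) r)
  end.

Definition sem (p : treepair) (s : stream) : stream :=
  place (snd p) (fst (locate (fst p) s)) (snd (locate (fst p) s)).

Lemma leaves_pos t : 1 <= leaves t.
Proof. induction t; simpl; lia. Qed.

Lemma leaves_carets t : leaves t = S (carets t).
Proof. induction t; simpl; lia. Qed.

Lemma locate_lt t s : fst (locate t s) < leaves t.
Proof. revert s; induction t; intro s; simpl. lia.
  destruct (s 0); simpl. specialize (IHt2 (stl s)). lia. specialize (IHt1 (stl s)). lia. Qed.

Lemma place_locate t s : place t (fst (locate t s)) (snd (locate t s)) = s.
Proof. revert s; induction t; intro s; simpl. reflexivity.
  destruct (s 0) eqn:E; simpl.
  - pose proof (locate_lt t2 (stl s)).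
    replace (leaves t1 + fst (locate t2 (stl s)) <? leaves t1) with false by (symmetry; apply Nat.ltb_ge; lia).
    replace (leaves t1 + fst (locate t2 (stl s)) - leaves t1) with (fst (locate t2 (stl s))) by lia.
    rewrite IHt2, <- E. apply scons_eta.
  - pose proof (locate_lt t1 (stl s)).
    replace (fst (locate t1 (stl s)) <? leaves t1) with true by (symmetry; apply Nat.ltb_lt; lia).
    rewrite IHt1, <- E. apply scons_eta.
Qed.

Lemma locate_place t i r : i < leaves t -> locate t (place t i r) = (i, r).
Proof. revert i; induction t; intros i Hi; simpl in *. f_equal; lia.
  destruct (i <? leaves t1) eqn:E.
  - apply Nat.ltb_lt in E. simpl. apply IHt1; auto.
  - apply Nat.ltb_ge in E. simpl. change (stl (scons true (place t2 (i - leaves t1) r))) with (place t2 (i - leaves t1) r).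
    rewrite IHt2 by lia. simpl. f_equal. lia.
Qed.

Lemma stl_scons b s : stl (scons b s) = s.
Proof. reflexivity. Qed.

Fixpoint sapp (q : list bool) (s : stream) : stream :=
  match q with [] => s | b :: q' => scons b (sapp q' s) end.

Lemma sapp_app q q' s : sapp (q ++ q') s = sapp q (sapp q' s).
Proof. induction q; simpl; congruence. Qed.

Definition good (f : stream -> stream) := exists q, forall s, f s = sapp q s.

Fixpoint Fits (f : stream -> stream) (t : tree) : Prop :=
  match t with
  | Lf => good f
  | Nd a b => ~ good f /\ Fits (fun s => f (scons false s)) a /\ Fits (fun s => f (scons true s)) b
  end.

Lemma Fits_ext f g t : (forall s, f s = g s) -> Fits f t -> Fits g t.
Proof. revert f g; induction t; intros f g H; simpl.
  - intros [q Hq]. exists q. intro s. rewrite <- H. auto.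
  - intros [H1 [H2 H3]]. split; [|split].
    + intros [q Hq]. apply H1. exists q. intro s. rewrite H. auto.
    + eapply IHt1; [|exact H2]. intro; apply H.
    + eapply IHt2; [|exact H3]. intro; apply H.
Qed.

Lemma Fits_unique t t' f : Fits f t -> Fits f t' -> t = t'.
Proof. revert t' f; induction t; intros t' f H H'; destruct t'; simpl in *; try tauto.
  destruct H as [_ [Ha Hb]], H' as [_ [Ha' Hb']].
  f_equal; [eapply IHt1; eauto | eapply IHt2; eauto]. Qed.

Lemma place_id c i : i < leaves c -> (forall s, place c i s = s) -> c = Lf.
Proof. intros Hi H. destruct c; auto. exfalso. simpl in H.
  destruct (i <? leaves c1).
  - specialize (H (fun _ => true)). pose proof (f_equal (fun f => f 0) H). simpl in H0. discriminate.
  - specialize (H (fun _ => false)). pose proof (f_equal (fun f => f 0) H). simpl in H0. discriminate.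
Qed.

Lemma exposed_Nd a b base : (a <> Lf \/ b <> Lf) ->
  exposed (Nd a b) base = exposed a base ++ exposed b (base + leaves a).
Proof. intros H. destruct a, b; try reflexivity. destruct H; congruence. Qed.

Lemma exposed_NdLL base : exposed (Nd Lf Lf) base = [base].
Proof. reflexivity. Qed.

Lemma sib_exposed (T : tree) : forall k q base,
  S (S k) <= leaves T ->
  (forall s, place T k s = sapp (q ++ [false]) s) ->
  (forall s, place T (S k) s = sapp (q ++ [true]) s) ->
  In (base + k) (exposed T base).
Proof.
  induction T as [|c IHc d IHd]; intros k q base Hk H1 H2; simpl in Hk. lia.
  destruct (Nat.eq_dec (S k) (leaves c)) as [Ek|Ek].
  -
    assert (Hq : q = []).
    { destruct q as [|b0 q']; auto. exfalso.
      specialize (H1 (fun _ => true)). specialize (H2 (fun _ => true)). simpl in H1, H2.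
      replace (k <? leaves c) with true in H1 by (symmetry; apply Nat.ltb_lt; lia).
      replace (S k <? leaves c) with false in H2 by (symmetry; apply Nat.ltb_ge; lia).
      apply scons_inj in H1. apply scons_inj in H2. destruct H1, H2. congruence. }
    subst q. simpl in H1, H2.
    assert (Hc : c = Lf).
    { apply (place_id c k); [lia|]. intro s. specialize (H1 s).
      replace (k <? leaves c) with true in H1 by (symmetry; apply Nat.ltb_lt; lia).
      apply scons_inj in H1. tauto. }
    assert (Hd : d = Lf).
    { apply (place_id d 0); [pose proof (leaves_pos d); lia|]. intro s. specialize (H2 s).
      replace (S k <? leaves c) with false in H2 by (symmetry; apply Nat.ltb_ge; lia).
      apply scons_inj in H2. rewrite <- Ek in H2; simpl in H2; rewrite Nat.sub_diag in H2. tauto. }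
    subst c d. simpl in Ek. assert (k = 0) by lia. subst. simpl. left; lia.
  - destruct (Nat.lt_ge_cases (S k) (leaves c)) as [Lt|Ge].
    + destruct q as [|b0 q'].
      { exfalso. specialize (H1 (fun _ => true)). specialize (H2 (fun _ => true)). simpl in H1, H2.
        replace (k <? leaves c) with true in H1 by (symmetry; apply Nat.ltb_lt; lia).
        replace (S k <? leaves c) with true in H2 by (symmetry; apply Nat.ltb_lt; lia).
        apply scons_inj in H1. apply scons_inj in H2. destruct H1, H2. congruence. }
      assert (Hb : b0 = false).
      { specialize (H1 (fun _ => true)). simpl in H1.
        replace (k <? leaves c) with true in H1 by (symmetry; apply Nat.ltb_lt; lia).
        apply scons_inj in H1. destruct H1; congruence. }
      subst b0.
      assert (In (base + k) (exposed c base)).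
      { apply (IHc k q' base); [lia| |]; intro s.
        - specialize (H1 s). simpl in H1.
          replace (k <? leaves c) with true in H1 by (symmetry; apply Nat.ltb_lt; lia).
          apply scons_inj in H1. tauto.
        - specialize (H2 s). simpl in H2.
          replace (S k <? leaves c) with true in H2 by (symmetry; apply Nat.ltb_lt; lia).
          apply scons_inj in H2. tauto. }
      destruct c as [|c1 c2]; [simpl in Lt; lia|].
      rewrite exposed_Nd by (left; discriminate). apply in_or_app; left; auto.
    + assert (Ge' : leaves c <= k) by lia.
      destruct q as [|b0 q'].
      { exfalso. specialize (H1 (fun _ => true)). specialize (H2 (fun _ => true)). simpl in H1, H2.
        replace (k <? leaves c) with false in H1 by (symmetry; apply Nat.ltb_ge; lia).
        replace (S k <? leaves c) with false in H2 by (symmetry; apply Nat.ltb_ge; lia).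
        apply scons_inj in H1. apply scons_inj in H2. destruct H1, H2. congruence. }
      assert (Hb : b0 = true).
      { specialize (H1 (fun _ => true)). simpl in H1.
        replace (k <? leaves c) with false in H1 by (symmetry; apply Nat.ltb_ge; lia).
        apply scons_inj in H1. destruct H1; congruence. }
      subst b0.
      assert (In (base + leaves c + (k - leaves c)) (exposed d (base + leaves c))).
      { apply (IHd (k - leaves c) q' (base + leaves c)); [lia| |]; intro s.
        - specialize (H1 s). simpl in H1.
          replace (k <? leaves c) with false in H1 by (symmetry; apply Nat.ltb_ge; lia).
          apply scons_inj in H1. tauto.
        - specialize (H2 s). simpl in H2.
          replace (S k <? leaves c) with false in H2 by (symmetry; apply Nat.ltb_ge; lia).
          apply scons_inj in H2. replace (S (k - leaves c)) with (S k - leaves c) by lia. tauto. }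
      replace (base + k) with (base + leaves c + (k - leaves c)) by lia.
      destruct d as [|d1 d2]; [simpl in *; lia|].
      rewrite exposed_Nd by (right; discriminate). apply in_or_app; right; auto.
Qed.

Lemma tree_eq_dec (a b : tree) : {a = b} + {a <> b}.
Proof. decide equality. Defined.

Lemma place_sapp T i : exists q, forall s, place T i s = sapp q s.
Proof. revert i; induction T; intro i; simpl. exists []; auto.
  destruct (i <? leaves T1).
  - destruct (IHT1 i) as [q Hq]. exists (false :: q). intro s; simpl; rewrite Hq; auto.
  - destruct (IHT2 (i - leaves T1)) as [q Hq]. exists (true :: q). intro s; simpl; rewrite Hq; auto.
Qed.

Lemma key_common (X : tree) : forall t k q, t <> Lf -> k + leaves t <= leaves X ->
  (forall s, place X (k + fst (locate t s)) (snd (locate t s)) = sapp q s) ->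
  exists i, In i (exposed t k) /\ In i (exposed X 0).
Proof.
  induction t as [|a IHa b IHb]; intros k q Hne Hl H; [congruence|].
  simpl in Hl.
  destruct (tree_eq_dec a Lf) as [Ha|Ha].
  - subst a. destruct (tree_eq_dec b Lf) as [Hb|Hb].
    + subst b. exists k. split; [simpl; auto|].
      apply (sib_exposed X k q 0); [simpl in Hl; lia| |]; intro s.
      * specialize (H (scons false s)). simpl in H; rewrite ?stl_scons in H. rewrite Nat.add_0_r in H. rewrite H, sapp_app. reflexivity.
      * specialize (H (scons true s)). simpl in H; rewrite ?stl_scons in H. replace (k + 1) with (S k) in H by lia.
        rewrite H, sapp_app. reflexivity.
    + destruct (IHb (S k) (q ++ [true]) Hb) as [i [Hi1 Hi2]]; [simpl in Hl; lia| |].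
      * intro s. specialize (H (scons true s)). simpl in H; rewrite ?stl_scons in H. replace (k + S (fst (locate b s))) with (S k + fst (locate b s)) in H by lia.
        rewrite H, sapp_app. reflexivity.
      * exists i. split; auto. rewrite exposed_Nd by (right; auto). simpl. rewrite Nat.add_1_r. auto.
  - destruct (IHa k (q ++ [false]) Ha) as [i [Hi1 Hi2]]; [pose proof (leaves_pos b); lia| |].
    + intro s. specialize (H (scons false s)). simpl in H; rewrite ?stl_scons in H. rewrite H, sapp_app. reflexivity.
    + exists i. split; auto. rewrite exposed_Nd by (left; auto). apply in_or_app; auto.
Qed.

Lemma fits_gen (X : tree) : forall t k (g : stream -> stream),
  (forall s, g s = place X (k + fst (locate t s)) (snd (locate t s))) ->
  k + leaves t <= leaves X ->
  (forall i, In i (exposed t k) -> In i (exposed X 0) -> False) ->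
  Fits g t.
Proof.
  induction t as [|a IHa b IHb]; intros k g Hg Hl Hno; simpl.
  - destruct (place_sapp X (k + 0)) as [q Hq]. exists q. intro s. rewrite Hg. simpl. apply Hq.
  - simpl in Hl. split; [|split].
    + intros [q Hq]. destruct (key_common X (Nd a b) k q) as [i [Hi1 Hi2]]; [discriminate|simpl; lia| |].
      * intro s. rewrite <- Hg. apply Hq.
      * eauto.
    + apply (IHa k); [| pose proof (leaves_pos b); lia |].
      * intro s. rewrite Hg. simpl. rewrite stl_scons. reflexivity.
      * intros i Hi1 Hi2. apply (Hno i); auto.
        destruct (tree_eq_dec a Lf); [subst; simpl in Hi1; tauto|].
        rewrite exposed_Nd by auto. apply in_or_app; auto.
    + apply (IHb (k + leaves a)); [| lia |].
      * intro s. rewrite Hg. simpl. rewrite stl_scons. f_equal. lia.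
      * intros i Hi1 Hi2. apply (Hno i); auto.
        destruct (tree_eq_dec b Lf); [subst; simpl in Hi1; tauto|].
        rewrite exposed_Nd by auto. apply in_or_app; auto.
Qed.

Lemma reduced_nocommon p : is_reduced p = true ->
  forall i, In i (exposed (fst p) 0) -> In i (exposed (snd p) 0) -> False.
Proof.
  unfold is_reduced, common_caret. destruct (find _ _) eqn:E; [discriminate|]. intros _ i H1 H2.
  pose proof (find_none _ _ E i H1). simpl in H.
  assert (existsb (Nat.eqb i) (exposed (snd p) 0) = true).
  { apply existsb_exists. exists i. split; auto. apply Nat.eqb_refl. }
  congruence.
Qed.

Lemma place_ext_eq (X Y : tree) : leaves X = leaves Y ->
  (forall i r, i < leaves X -> place X i r = place Y i r) -> X = Y.
Proof.
  revert Y; induction X as [|a IHa b IHb]; intros Y HL H; destruct Y as [|c d]; simpl in *; auto.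
  - pose proof (leaves_pos c); pose proof (leaves_pos d); lia.
  - pose proof (leaves_pos a); pose proof (leaves_pos b); lia.
  - assert (Ela : leaves a = leaves c).
    { destruct (Nat.lt_total (leaves a) (leaves c)) as [L|[L|L]]; auto; exfalso.
      - specialize (H (leaves a) (fun _ => true)). pose proof (leaves_pos b).
        rewrite Nat.ltb_irrefl in H. replace (leaves a <? leaves c) with true in H by (symmetry; apply Nat.ltb_lt; auto).
        specialize (H ltac:(lia)). apply scons_inj in H. destruct H; discriminate.
      - specialize (H (leaves c) (fun _ => true)). pose proof (leaves_pos d).
        rewrite Nat.ltb_irrefl in H. replace (leaves c <? leaves a) with true in H by (symmetry; apply Nat.ltb_lt; auto).
        specialize (H ltac:(lia)). apply scons_inj in H. destruct H; discriminate. }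
    f_equal.
    + apply IHa; auto. intros i r Hi. specialize (H i r ltac:(lia)).
      rewrite <- Ela in H. replace (i <? leaves a) with true in H by (symmetry; apply Nat.ltb_lt; auto).
      apply scons_inj in H. tauto.
    + apply IHb; [lia|]. intros i r Hi. specialize (H (leaves a + i) r ltac:(lia)).
      rewrite <- Ela in H. replace (leaves a + i <? leaves a) with false in H by (symmetry; apply Nat.ltb_ge; lia).
      replace (leaves a + i - leaves a) with i in H by lia.
      apply scons_inj in H. tauto.
Qed.

Definition elt (p : treepair) : Prop := leaves (fst p) = leaves (snd p) /\ is_reduced p = true.

Lemma is_elt_elt p : is_elt p <-> elt p.
Proof. unfold is_elt, elt. rewrite !leaves_carets. split; intros [H1 H2]; split; auto; lia. Qed.

Lemma uniq p p' : elt p -> elt p' -> (forall s, sem p s = sem p' s) -> p = p'.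
Proof.
  destruct p as [T S], p' as [T' S']. unfold elt, sem; simpl. intros [L1 R1] [L2 R2] H.
  assert (F1 : Fits (sem (T, S)) T).
  { apply (fits_gen S T 0); [intro; reflexivity| lia |]. apply (reduced_nocommon _ R1). }
  assert (F2 : Fits (sem (T, S)) T').
  { apply (fits_gen S' T' 0 (sem (T,S))); [intro; unfold sem; simpl; rewrite H; reflexivity| lia |].
    apply (reduced_nocommon _ R2). }
  assert (T = T') by (eapply Fits_unique; eauto). subst T'.
  f_equal. apply place_ext_eq; [lia|]. intros i r Hi.
  specialize (H (place T i r)). rewrite locate_place in H by lia. exact H.
Qed.

Fixpoint sumL (F : list tree) : nat := match F with [] => 0 | t :: F' => leaves t + sumL F' end.

Fixpoint gr (t : tree) (F : list tree) : tree :=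
  match t with
  | Lf => hd Lf F
  | Nd a b => Nd (gr a (firstn (leaves a) F)) (gr b (skipn (leaves a) F))
  end.

Lemma sumL_app F G : sumL (F ++ G) = sumL F + sumL G.
Proof. induction F; simpl; lia. Qed.

Lemma split_list {A} (F : list A) n m : length F = n + m ->
  exists Fa Fb, F = Fa ++ Fb /\ length Fa = n /\ length Fb = m.
Proof. intro H. exists (firstn n F), (skipn n F). rewrite firstn_skipn. split; auto.
  rewrite length_firstn, length_skipn. lia. Qed.

Lemma gr_Nd a b Fa Fb : length Fa = leaves a -> gr (Nd a b) (Fa ++ Fb) = Nd (gr a Fa) (gr b Fb).
Proof. intro H. simpl. rewrite <- H, firstn_app, skipn_app, skipn_all, Nat.sub_diag.
  rewrite firstn_all. simpl. rewrite app_nil_r. reflexivity. Qed.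

Lemma leaves_gr t F : length F = leaves t -> leaves (gr t F) = sumL F.
Proof. revert F; induction t; intros F H; simpl in H.
  - destruct F as [|f [|]]; simpl in *; try lia. 
  - destruct (split_list F (leaves t1) (leaves t2) H) as [Fa [Fb [-> [H1 H2]]]].
    rewrite gr_Nd by auto. simpl. rewrite IHt1, IHt2, sumL_app; auto.
Qed.

Lemma graft_gr t F l : length F = leaves t -> graft t (F ++ l) = (gr t F, l).
Proof. revert F l; induction t; intros F l H; simpl in H.
  - destruct F as [|f [|]]; simpl in *; try lia. reflexivity.
  - destruct (split_list F (leaves t1) (leaves t2) H) as [Fa [Fb [-> [H1 H2]]]].
    rewrite gr_Nd by auto. simpl. rewrite <- app_assoc, IHt1 by auto. rewrite IHt2 by auto. reflexivity.
Qed.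

Lemma sumL_firstn_nth F i : i < length F -> sumL (firstn i F) + leaves (nth i F Lf) <= sumL F.
Proof. revert i; induction F; intros i H; simpl in *. lia.
  destruct i; simpl. lia. specialize (IHF i ltac:(lia)). lia. Qed.

Lemma locate_gr t F s : length F = leaves t ->
  locate (gr t F) s =
  (sumL (firstn (fst (locate t s)) F) + fst (locate (nth (fst (locate t s)) F Lf) (snd (locate t s))),
   snd (locate (nth (fst (locate t s)) F Lf) (snd (locate t s)))).
Proof.
  revert F s; induction t as [|a IHa b IHb]; intros F s H; simpl in H.
  - destruct F as [|f [|]]; simpl in *; try lia. destruct (locate f s); reflexivity.
  - destruct (split_list F (leaves a) (leaves b) H) as [Fa [Fb [-> [H1 H2]]]].
    rewrite gr_Nd by auto. simpl. destruct (s 0).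
    + simpl. rewrite IHb by auto. simpl. rewrite leaves_gr by auto.
      rewrite firstn_app. rewrite (firstn_all2 Fa) by lia. rewrite sumL_app.
      replace (leaves a + fst (locate b (stl s)) - leaves a) with (fst (locate b (stl s))) by lia.
      rewrite app_nth2 by lia. replace (leaves a + fst (locate b (stl s)) - length Fa) with (fst (locate b (stl s))) by lia.
      f_equal. lia.
    + rewrite IHa by auto. pose proof (locate_lt a (stl s)).
      rewrite firstn_app. replace (fst (locate a (stl s)) - length Fa) with 0 by lia. simpl.
      rewrite app_nil_r, app_nth1 by lia. reflexivity.
Qed.

Lemma place_gr t F i j r : length F = leaves t -> i < leaves t -> j < leaves (nth i F Lf) ->
  place (gr t F) (sumL (firstn i F) + j) r = place t i (place (nth i F Lf) j r).
Proof.
  revert F i; induction t as [|a IHa b IHb]; intros F i H Hi Hj; simpl in H, Hi.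
  - destruct F as [|f [|]]; simpl in *; try lia. assert (i = 0) by lia. subst. reflexivity.
  - destruct (split_list F (leaves a) (leaves b) H) as [Fa [Fb [-> [H1 H2]]]].
    rewrite gr_Nd by auto. simpl. rewrite leaves_gr by auto.
    destruct (Nat.lt_ge_cases i (leaves a)) as [L|L].
    + rewrite app_nth1 in * by lia. rewrite firstn_app. replace (i - length Fa) with 0 by lia.
      simpl. rewrite app_nil_r.
      pose proof (sumL_firstn_nth Fa i ltac:(lia)).
      replace (sumL (firstn i Fa) + j <? sumL Fa) with true by (symmetry; apply Nat.ltb_lt; lia).
      replace (i <? leaves a) with true by (symmetry; apply Nat.ltb_lt; lia).
      rewrite IHa; auto.
    + rewrite app_nth2 in * by lia. rewrite firstn_app, firstn_all2 by lia. rewrite sumL_app.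
      replace (sumL Fa + sumL (firstn (i - length Fa) Fb) + j <? sumL Fa) with false by (symmetry; apply Nat.ltb_ge; lia).
      replace (i <? leaves a) with false by (symmetry; apply Nat.ltb_ge; lia).
      replace (sumL Fa + sumL (firstn (i - length Fa) Fb) + j - sumL Fa) with (sumL (firstn (i - length Fa) Fb) + j) by lia.
      rewrite IHb; try lia. rewrite H1. reflexivity.
Qed.

Lemma sem_gr T S F s : leaves T = leaves S -> length F = leaves T ->
  sem (gr T F, gr S F) s = sem (T, S) s.
Proof.
  intros HL HF. unfold sem; simpl. rewrite locate_gr by auto. simpl.
  pose proof (locate_lt T s).
  rewrite place_gr by (auto; try lia; apply locate_lt). rewrite place_locate. reflexivity.
Qed.

Fixpoint tle (s t : tree) : Prop :=
  match s, t with
  | Lf, _ => True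
  | Nd _ _, Lf => False
  | Nd a b, Nd c d => tle a c /\ tle b d
  end.


Lemma tle_refl t : tle t t.
Proof. induction t; simpl; auto. Qed.

Lemma join_ge_l s t : tle s (join s t).
Proof. revert t; induction s; intro t; simpl; auto. destruct t; simpl. split; apply tle_refl. auto. Qed.

Lemma join_ge_r s t : tle t (join s t).
Proof. revert t; induction s; intro t; simpl. apply tle_refl. destruct t; simpl; auto. Qed.

Lemma diff_len t u : tle t u -> length (diff t u) = leaves t.
Proof. revert u; induction t; intros u H; destruct u; simpl in *; try tauto; auto.
  rewrite length_app, IHt1, IHt2; tauto. Qed.

Lemma gr_diff t u : tle t u -> gr t (diff t u) = u.
Proof. revert u; induction t; intros u H; destruct u; simpl in *; try tauto; auto.
  destruct H. change (gr (Nd t1 t2) (diff t1 u1 ++ diff t2 u2) = Nd u1 u2).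
  rewrite gr_Nd by (apply diff_len; auto). rewrite IHt1, IHt2; auto. Qed.

Lemma sumL_diff t u : tle t u -> sumL (diff t u) = leaves u.
Proof. intro H. rewrite <- (gr_diff t u) at 2 by auto. rewrite leaves_gr; auto. apply diff_len; auto. Qed.

Lemma sem_comp X Y Z s : leaves X = leaves Y -> sem (Y, Z) (sem (X, Y) s) = sem (X, Z) s.
Proof. intro H. unfold sem; simpl. rewrite locate_place. reflexivity. rewrite <- H. apply locate_lt. Qed.

Definition bal (p : treepair) := leaves (fst p) = leaves (snd p).

Lemma mul_pre_sem (a b : treepair) s : bal a -> bal b ->
  let U := join (snd b) (fst a) in
  let P := (fst (graft (fst b) (diff (snd b) U)), fst (graft (snd a) (diff (fst a) U))) in
  bal P /\ sem P s = sem a (sem b s).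
Proof.
  destruct a as [A1 A2], b as [B1 B2]. unfold bal; simpl. intros Ha Hb. cbv zeta.
  set (U := join B2 A1).
  assert (T1 : tle B2 U) by apply join_ge_l.
  assert (T2 : tle A1 U) by apply join_ge_r.
  pose proof (diff_len _ _ T1) as D1. pose proof (diff_len _ _ T2) as D2.
  assert (G1 : graft B1 (diff B2 U) = (gr B1 (diff B2 U), [])).
  { rewrite <- graft_gr by lia. rewrite app_nil_r. reflexivity. }
  assert (G2 : graft A2 (diff A1 U) = (gr A2 (diff A1 U), [])).
  { rewrite <- graft_gr by lia. rewrite app_nil_r. reflexivity. }
  rewrite G1, G2. simpl. split.
  - rewrite !leaves_gr by lia. rewrite !sumL_diff; auto.
  - rewrite <- (sem_gr B1 B2 (diff B2 U)) by lia.
    rewrite <- (sem_gr A1 A2 (diff A1 U)) by lia.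
    rewrite !gr_diff by auto.
    rewrite sem_comp. reflexivity. rewrite leaves_gr by lia. rewrite sumL_diff; auto.
Qed.

Lemma exposed_bounds t : forall base i, In i (exposed t base) -> base <= i /\ i + 2 <= base + leaves t.
Proof. induction t as [|a IHa b IHb]; intros base i H. simpl in H; tauto.
  destruct (tree_eq_dec a Lf); destruct (tree_eq_dec b Lf); subst.
  - simpl in H. destruct H as [->|[]]. simpl. lia.
  - rewrite exposed_Nd in H by auto. simpl in H. apply IHb in H. simpl. lia.
  - rewrite exposed_Nd in H by auto. apply in_app_or in H. destruct H as [H|H]; [apply IHa in H|simpl in H; tauto]. simpl. lia.
  - rewrite exposed_Nd in H by auto. apply in_app_or in H. destruct H as [H|H]; [apply IHa in H|apply IHb in H]; simpl; pose proof (leaves_pos a); pose proof (leaves_pos b); lia.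
Qed.

Lemma contract_Nd a b i base : (a <> Lf \/ b <> Lf) ->
  contract (Nd a b) i base = Nd (contract a i base) (contract b i (base + leaves a)).
Proof. intro H. destruct a, b; try reflexivity. destruct H; congruence. Qed.

Lemma contract_NC t : forall base i, ~ In i (exposed t base) -> contract t i base = t.
Proof. induction t as [|a IHa b IHb]; intros base i H. reflexivity.
  destruct (tree_eq_dec a Lf); destruct (tree_eq_dec b Lf); subst.
  - simpl in *. destruct (Nat.eqb_spec base i); [subst; tauto|auto].
  - rewrite contract_Nd by auto. rewrite exposed_Nd in H by auto. rewrite IHb; auto.
  - rewrite contract_Nd by auto. rewrite exposed_Nd in H by auto. rewrite IHa, IHb; [reflexivity| |]; intro; apply H; apply in_or_app; auto.
  - rewrite contract_Nd by auto. rewrite exposed_Nd in H by auto. rewrite IHa, IHb; [reflexivity| |]; intro; apply H; apply in_or_app; auto.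
Qed.

Lemma firstn_exact {A} (Fa Fb : list A) n : length Fa = n -> firstn n (Fa ++ Fb) = Fa.
Proof. intros <-. rewrite firstn_app, Nat.sub_diag, firstn_all. simpl. apply app_nil_r. Qed.
Lemma skipn_exact {A} (Fa Fb : list A) n : length Fa = n -> skipn n (Fa ++ Fb) = Fb.
Proof. intros <-. rewrite skipn_app, Nat.sub_diag, skipn_all. reflexivity. Qed.

Definition Fk (k n : nat) : list tree := repeat Lf k ++ Nd Lf Lf :: repeat Lf (n - 1 - k).

Lemma Fk_len k n : k < n -> length (Fk k n) = n.
Proof. intro. unfold Fk. rewrite length_app. simpl. rewrite !repeat_length. lia. Qed.

Lemma gr_repeat t : gr t (repeat Lf (leaves t)) = t.
Proof. induction t; simpl; auto. rewrite repeat_app. fold (gr (Nd t1 t2)).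
  change (gr (Nd t1 t2) (repeat Lf (leaves t1) ++ repeat Lf (leaves t2)) = Nd t1 t2).
  rewrite gr_Nd by apply repeat_length. congruence. Qed.

Lemma contract_spec t : forall base i, In i (exposed t base) ->
  leaves t = S (leaves (contract t i base)) /\ i - base < leaves (contract t i base) /\
  t = gr (contract t i base) (Fk (i - base) (leaves (contract t i base))).
Proof. induction t as [|a IHa b IHb]; intros base i H. simpl in H; tauto.
  pose proof (exposed_bounds _ _ _ H) as Bd.
  destruct (tree_eq_dec a Lf); destruct (tree_eq_dec b Lf); subst.
  - simpl in H. destruct H as [<-|[]]. simpl. rewrite Nat.eqb_refl. simpl. rewrite Nat.sub_diag. auto.
  - rewrite contract_Nd by auto. rewrite exposed_Nd in H by auto. simpl in H.
    destruct (IHb _ _ H) as [L1 [L2 L3]]. pose proof (exposed_bounds _ _ _ H).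
    rewrite (contract_NC Lf) by (simpl; tauto). simpl.
    split; [lia|split; [lia|]].
    replace (Fk (i - base) (S (leaves (contract b i (base + 1))))) with ([Lf] ++ Fk (i - (base + 1)) (leaves (contract b i (base + 1)))).
    + simpl. congruence.
    + unfold Fk. replace (i - base) with (S (i - (base + 1))) by lia. simpl. replace (leaves (contract b i (base + 1)) - 0 - S (i - (base + 1))) with (leaves (contract b i (base + 1)) - 1 - (i - (base + 1))) by lia. reflexivity.
  - rewrite contract_Nd by auto. rewrite exposed_Nd in H by auto. apply in_app_or in H. destruct H as [H|H]; [|simpl in H; tauto].
    destruct (IHa _ _ H) as [L1 [L2 L3]]. pose proof (exposed_bounds _ _ _ H).
    rewrite (contract_NC Lf) by (simpl; tauto). simpl.
    split; [lia|split; [lia|]].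
    replace (Fk (i - base) (leaves (contract a i base) + 1)) with (Fk (i - base) (leaves (contract a i base)) ++ [Lf]).
    + rewrite firstn_exact, skipn_exact by (apply Fk_len; lia). simpl. congruence.
    + unfold Fk. rewrite <- app_assoc. simpl. f_equal. f_equal. f_equal.
      replace (leaves (contract a i base) + 1 - 1 - (i - base)) with (S (leaves (contract a i base) - 1 - (i - base))) by lia.
      rewrite <- repeat_cons. reflexivity.
  - rewrite contract_Nd by auto. rewrite exposed_Nd in H by auto. apply in_app_or in H.
    pose proof (leaves_pos a); pose proof (leaves_pos b).
    destruct H as [H|H].
    + destruct (IHa _ _ H) as [L1 [L2 L3]]. pose proof (exposed_bounds _ _ _ H).
      rewrite (contract_NC b) by (intro Hb'; apply exposed_bounds in Hb'; lia). simpl.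
      split; [lia|split; [lia|]].
      replace (Fk (i - base) (leaves (contract a i base) + leaves b)) with (Fk (i - base) (leaves (contract a i base)) ++ repeat Lf (leaves b)).
      * rewrite firstn_exact, skipn_exact by (apply Fk_len; lia). rewrite gr_repeat. congruence.
      * unfold Fk. rewrite <- app_assoc. simpl. f_equal. f_equal.
        replace (leaves (contract a i base) + leaves b - 1 - (i - base)) with ((leaves (contract a i base) - 1 - (i - base)) + leaves b) by lia.
        rewrite repeat_app. reflexivity.
    + destruct (IHb _ _ H) as [L1 [L2 L3]]. pose proof (exposed_bounds _ _ _ H).
      rewrite (contract_NC a) by (intro Ha'; apply exposed_bounds in Ha'; lia). simpl.
      split; [lia|split; [lia|]].
      replace (Fk (i - base) (leaves a + leaves (contract b i (base + leaves a)))) with (repeat Lf (leaves a) ++ Fk (i - (base + leaves a)) (leaves (contract b i (base + leaves a)))).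
      * rewrite firstn_exact, skipn_exact by apply repeat_length. rewrite gr_repeat. congruence.
      * unfold Fk. rewrite app_assoc, <- repeat_app. f_equal; [f_equal; lia|]. f_equal. f_equal. lia.
Qed.

Lemma common_caret_some p i : common_caret p = Some i ->
  In i (exposed (fst p) 0) /\ In i (exposed (snd p) 0).
Proof. unfold common_caret. intro H. apply find_some in H. destruct H as [H1 H2]. split; auto.
  apply existsb_exists in H2. destruct H2 as [x [Hx Ex]]. apply Nat.eqb_eq in Ex. subst; auto. Qed.

Lemma reduce_fuel_spec fuel : forall p, bal p -> carets (fst p) <= fuel ->
  elt (reduce_fuel fuel p) /\ forall s, sem (reduce_fuel fuel p) s = sem p s.
Proof.
  induction fuel; intros p Hb Hc; simpl.
  - destruct p as [T S]; simpl in *. destruct T; simpl in Hc; [|lia].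
    split; auto. split; auto.
  - destruct (common_caret p) eqn:E.
    + destruct (common_caret_some _ _ E) as [H1 H2].
      destruct (contract_spec _ _ _ H1) as [A1 [A2 A3]].
      destruct (contract_spec _ _ _ H2) as [B1 [B2 B3]].
      destruct p as [T S]; unfold bal in Hb; simpl in *.
      rewrite Nat.sub_0_r in *.
      destruct (IHfuel (contract T n 0, contract S n 0)) as [E1 E2]; [unfold bal; simpl; lia|simpl; rewrite leaves_carets in A1; rewrite leaves_carets in A1; lia|].
      split; auto. intro s. rewrite E2.
      assert (LL : leaves (contract S n 0) = leaves (contract T n 0)) by lia.
      rewrite LL in B3. rewrite A3 at 2. rewrite B3 at 2. rewrite sem_gr; auto. apply Fk_len; auto.
    + split; auto. split; auto. unfold is_reduced. rewrite E. auto.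
Qed.

Lemma mul_spec a b : bal a -> bal b -> elt (mul a b) /\ forall s, sem (mul a b) s = sem a (sem b s).
Proof.
  intros Ha Hb. destruct (mul_pre_sem a b (fun _ => true) Ha Hb) as [HP _].
  unfold mul, reduce. cbv zeta in HP.
  destruct (reduce_fuel_spec _ _ HP (le_n _)) as [E1 E2]. split; auto.
  intro s. rewrite E2. apply (mul_pre_sem a b s Ha Hb).
Qed.

Definition swap (p : treepair) : treepair := (snd p, fst p).

Lemma sem_swap p s : bal p -> sem p (sem (swap p) s) = s.
Proof. destruct p as [T S]. unfold bal, sem, swap; simpl. intro H.
  rewrite locate_place. apply place_locate. rewrite H. apply locate_lt. Qed.

Lemma letter_bal l : bal (letter_elt l).
Proof. destruct l as [[|] [|]]; reflexivity. Qed.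

Lemma letter_inv_elt l : letter_elt (letter_inv l) = swap (letter_elt l).
Proof. destruct l as [[|] [|]]; reflexivity. Qed.

Lemma letter_inv_inv l : letter_inv (letter_inv l) = l.
Proof. destruct l as [g []]; reflexivity. Qed.

Lemma sem_letter_inv l s : sem (letter_elt l) (sem (letter_elt (letter_inv l)) s) = s.
Proof. rewrite letter_inv_elt. apply sem_swap, letter_bal. Qed.

Lemma sem_letter_inv' l s : sem (letter_elt (letter_inv l)) (sem (letter_elt l) s) = s.
Proof. rewrite <- (letter_inv_inv l) at 2. apply sem_letter_inv. Qed.

Fixpoint compw (u : word) (s : stream) : stream :=
  match u with [] => s | l :: u' => sem (letter_elt l) (compw u' s) end.

Lemma compw_app u v s : compw (u ++ v) s = compw u (compw v s).
Proof. induction u; simpl; congruence. Qed.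

Lemma compw_inv u s : compw (inv_word u) (compw u s) = s.
Proof. revert s; induction u; intro s; simpl; auto. unfold inv_word in *. simpl. rewrite compw_app. simpl.
  rewrite sem_letter_inv'. auto. Qed.

Lemma compw_inv' u s : compw u (compw (inv_word u) s) = s.
Proof. revert s; induction u; intro s; simpl; auto. unfold inv_word in *. simpl. rewrite compw_app. simpl.
  rewrite IHu. apply sem_letter_inv. Qed.

Definition rot0 (t : tree) : option tree :=
  match t with Nd (Nd A B) C => Some (Nd A (Nd B C)) | _ => None end.
Definition rot0i (t : tree) : option tree :=
  match t with Nd A (Nd B C) => Some (Nd (Nd A B) C) | _ => None end.
Definition rot1 (t : tree) : option tree :=
  match t with Nd A R => option_map (Nd A) (rot0 R) | _ => None end.
Definition rot1i (t : tree) : option tree :=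
  match t with Nd A R => option_map (Nd A) (rot0i R) | _ => None end.

Definition act (l : letter) : tree -> option tree :=
  match l with
  | (g0, true) => rot0 | (g0, false) => rot0i | (g1, true) => rot1 | (g1, false) => rot1i
  end.

Lemma s3 (s : stream) : s = scons (s 0) (scons (s 1) (scons (s 2) (stl (stl (stl s))))).
Proof. apply functional_extensionality; intros [|[|[|n]]]; reflexivity. Qed.

Lemma rot0_spec T T' s : rot0 T = Some T' -> locate T (sem (letter_elt x0) s) = locate T' s.
Proof. destruct T as [|[|A B] C]; simpl; try discriminate. intro H; injection H as <-.
  rewrite (s3 s). generalize (s 0) (s 1) (s 2) (stl (stl (stl s))). intros [] [] [] r; unfold sem; simpl;
  rewrite ?stl_scons; try reflexivity; f_equal; lia. Qed.

Lemma rot0i_spec T T' s : rot0i T = Some T' -> locate T (sem (letter_elt x0i) s) = locate T' s.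
Proof. destruct T as [|A [|B C]]; simpl; try discriminate. intro H; injection H as <-.
  rewrite (s3 s). generalize (s 0) (s 1) (s 2) (stl (stl (stl s))). intros [] [] [] r; unfold sem; simpl;
  rewrite ?stl_scons; try reflexivity; f_equal; lia. Qed.

Lemma sem_x1_t s : sem (letter_elt (g1,true)) (scons true s) = scons true (sem (letter_elt x0) s).
Proof. rewrite (s3 s). generalize (s 0) (s 1) (s 2) (stl (stl (stl s))). intros [] [] [] r; reflexivity. Qed.
Lemma sem_x1_f s : sem (letter_elt (g1,true)) (scons false s) = scons false s.
Proof. reflexivity. Qed.
Lemma sem_x1i_t s : sem (letter_elt (g1,false)) (scons true s) = scons true (sem (letter_elt x0i) s).
Proof. rewrite (s3 s). generalize (s 0) (s 1) (s 2) (stl (stl (stl s))). intros [] [] [] r; reflexivity. Qed.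
Lemma sem_x1i_f s : sem (letter_elt (g1,false)) (scons false s) = scons false s.
Proof. reflexivity. Qed.

Lemma rot1_spec T T' s : rot1 T = Some T' -> locate T (sem (letter_elt (g1,true)) s) = locate T' s.
Proof. destruct T as [|A R]; simpl; try discriminate.
  destruct (rot0 R) as [R'|] eqn:E; simpl; try discriminate. intro H; injection H as <-.
  rewrite <- (scons_eta s). destruct (s 0).
  - rewrite sem_x1_t. simpl. rewrite !stl_scons. rewrite (rot0_spec _ _ _ E). reflexivity.
  - rewrite sem_x1_f. reflexivity.
Qed.

Lemma rot1i_spec T T' s : rot1i T = Some T' -> locate T (sem (letter_elt (g1,false)) s) = locate T' s.
Proof. destruct T as [|A R]; simpl; try discriminate.
  destruct (rot0i R) as [R'|] eqn:E; simpl; try discriminate. intro H; injection H as <-.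
  rewrite <- (scons_eta s). destruct (s 0).
  - rewrite sem_x1i_t. simpl. rewrite !stl_scons. rewrite (rot0i_spec _ _ _ E). reflexivity.
  - rewrite sem_x1i_f. reflexivity.
Qed.

Lemma act_spec l T T' s : act l T = Some T' -> locate T (sem (letter_elt l) s) = locate T' s.
Proof. destruct l as [[|] [|]]; simpl; [apply rot0_spec|apply rot0i_spec|apply rot1_spec|apply rot1i_spec]. Qed.

Fixpoint actw (u : word) (T : tree) : option tree :=
  match u with
  | [] => Some T
  | l :: u' => match act l T with Some T1 => actw u' T1 | None => None end
  end.

Lemma actw_spec u T T' s : actw u T = Some T' -> locate T (compw u s) = locate T' s.
Proof. revert T; induction u as [|l u IH]; intros T H; simpl in *. congruence.
  destruct (act l T) as [T1|] eqn:E; [|discriminate].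
  rewrite (act_spec _ _ _ _ E). apply IH; auto. Qed.

Lemma actw_app u v T : actw (u ++ v) T = match actw u T with Some T1 => actw v T1 | None => None end.
Proof. revert T; induction u as [|l u IH]; intro T; simpl; auto.
  destruct (act l T); auto. Qed.

Fixpoint vine (k : nat) (V : tree) : tree := match k with 0 => V | S k' => Nd Lf (vine k' V) end.
Fixpoint combL (M t : tree) : tree := match t with Lf => M | Nd a b => Nd (combL M a) b end.
Fixpoint combR (t V : tree) : tree := match t with Lf => V | Nd a b => Nd a (combR b V) end.

Lemma vine_add m n V : vine (m + n) V = vine m (vine n V).
Proof. induction m; simpl; congruence. Qed.

Lemma vine_S k V : vine k (Nd Lf V) = Nd Lf (vine k V).
Proof. induction k; simpl; congruence. Qed.

Lemma combL_Lf t : combL Lf t = t.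
Proof. induction t; simpl; congruence. Qed.
Lemma combR_Lf t : combR t Lf = t.
Proof. induction t; simpl; congruence. Qed.

Lemma int_spec t : forall a M V,
  actw (trav_int t) (Nd a (Nd M (vine (carets t) V))) = Some (Nd a (Nd (combL M t) V)).
Proof.
  induction t as [|t1 IH1 t2 IH2]; intros a M V; simpl; auto.
  rewrite actw_app. rewrite <- vine_S, vine_add, vine_S, IH1. simpl.
  destruct t2 as [|u1 u2]; simpl.
  - reflexivity.
  - rewrite actw_app. fold (carets (Nd u1 u2)). specialize (IH2 (Nd a (combL M t1)) Lf V).
    simpl in IH2. rewrite IH2. simpl. rewrite combL_Lf. reflexivity.
Qed.

Lemma has_int_false t : has_interior_R t = false -> t = vine (carets t) Lf.
Proof. induction t as [|a IHa b IHb]; simpl; auto. destruct a; simpl; intro H; [|discriminate].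
  f_equal. auto. Qed.

Lemma combR_vine k V : combR (vine k Lf) V = vine k V.
Proof. induction k; simpl; congruence. Qed.

Lemma right_spec t : forall a V,
  actw (trav_right t) (Nd a (vine (carets t) V)) = Some (Nd a (combR t V)).
Proof.
  induction t as [|t1 IH1 t2 IH2]; intros a V; simpl; auto.
  rewrite actw_app. rewrite vine_add.
  pose proof (int_spec t1 a Lf (vine (carets t2) V)) as HI. simpl in HI. rewrite HI.
  rewrite combL_Lf.
  destruct (has_interior_R t2) eqn:E.
  - simpl. rewrite actw_app. rewrite IH2. simpl. reflexivity.
  - simpl. rewrite (has_int_false t2 E) at 2. rewrite combR_vine. reflexivity.
Qed.

Lemma left_spec t1 : forall t2 V,
  actw (trav_left (Nd t1 t2)) (vine (S (S (carets t1 + carets t2))) V) = Some (Nd t1 (Nd t2 V)).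
Proof.
  induction t1 as [|u1 IH1 u2 IH2]; intros t2 V.
  - simpl. pose proof (int_spec t2 Lf Lf V) as HI. simpl in HI. rewrite combL_Lf in HI. exact HI.
  - change (trav_left (Nd (Nd u1 u2) t2)) with (trav_left (Nd u1 u2) ++ [x0i] ++ trav_int t2).
    rewrite actw_app.
    replace (S (S (carets (Nd u1 u2) + carets t2))) with (S (S (carets u1 + carets u2)) + S (carets t2)) by (simpl; lia).
    rewrite vine_add, IH1. simpl. pose proof (int_spec t2 (Nd u1 u2) Lf V) as HI. simpl in HI.
    rewrite combL_Lf in HI. exact HI.
Qed.

Lemma gamma_spec t : actw (gamma t) (vine (carets t) Lf) = Some t.
Proof.
  destruct t as [|a b]; [reflexivity|]. destruct a as [|t1 t2].
  - change (actw (trav_right b) (Nd Lf (vine (carets b) Lf)) = Some (Nd Lf b)). rewrite right_spec, combR_Lf. reflexivity.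
  - change (actw (trav_left (Nd t1 t2) ++ [x0i] ++ trav_right b) (vine (S (S (carets t1 + carets t2) + carets b)) Lf) = Some (Nd (Nd t1 t2) b)).
    rewrite actw_app.
    replace (S (S (carets t1 + carets t2) + carets b)) with (S (S (carets t1 + carets t2)) + carets b) by lia.
    rewrite vine_add, left_spec. simpl. rewrite right_spec, combR_Lf. reflexivity.
Qed.

Lemma leaves_vine k V : leaves (vine k V) = k + leaves V.
Proof. induction k; simpl; lia. Qed.

Definition evw (v : treepair) (u : word) : treepair := fold_left (fun v l => mul v (letter_elt l)) u v.

Lemma walk_last v u : last (walk v u) one = evw v u.
Proof. revert v; induction u as [|l u IH]; intro v; simpl; auto.
  rewrite <- IH. destruct u; simpl; auto. Qed.

Lemma elt_bal p : elt p -> bal p.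
Proof. intros [H _]; exact H. Qed.

Lemma elt_one : elt one.
Proof. split; reflexivity. Qed.

Lemma sem_one s : sem one s = s.
Proof. reflexivity. Qed.

Lemma evw_spec u : forall v, elt v -> elt (evw v u) /\ forall s, sem (evw v u) s = sem v (compw u s).
Proof. induction u as [|l u IH]; intros v Hv; simpl; auto.
  destruct (mul_spec v (letter_elt l) (elt_bal _ Hv) (letter_bal l)) as [E1 E2].
  destruct (IH _ E1) as [F1 F2]. split; auto. intro s. rewrite F2, E2. reflexivity. Qed.

Inductive canc : word -> word -> Prop :=
  canc_i u1 u2 l : canc (u1 ++ l :: letter_inv l :: u2) (u1 ++ u2).

Lemma letter_eqb_eq a b : letter_eqb a b = true -> a = b.
Proof. destruct a as [[|] [|]], b as [[|] [|]]; intro H; try reflexivity; discriminate H. Qed.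

Lemma fr_canc_gen w : forall acc, clos_refl_trans _ canc (rev acc ++ w) (rev (fold_left fred_step w acc)).
Proof. induction w as [|x w IH]; intro acc; simpl.
  - rewrite app_nil_r. apply rt_refl.
  - destruct acc as [|y acc'] eqn:E; simpl.
    + apply (IH [x]).
    + destruct (letter_eqb y (letter_inv x)) eqn:Ey.
      * apply letter_eqb_eq in Ey. subst y. eapply rt_trans; [apply rt_step|apply IH].
        rewrite <- app_assoc. simpl. rewrite <- (letter_inv_inv x) at 2.
        apply (canc_i (rev acc') w (letter_inv x)).
      * specialize (IH (x :: y :: acc')). simpl in IH. rewrite <- !app_assoc in IH. simpl in IH.
        rewrite <- app_assoc. simpl. exact IH.
Qed.

Lemma fr_canc w : clos_refl_trans _ canc w (free_reduce w).
Proof. apply (fr_canc_gen w []). Qed.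

Lemma canc_compw u u' s : clos_refl_trans _ canc u u' -> compw u s = compw u' s.
Proof. induction 1; auto; [|congruence].
  destruct H. rewrite !compw_app. simpl. rewrite sem_letter_inv. reflexivity. Qed.

Lemma eta_sem w s : bal w -> compw (eta w) s = sem w s.
Proof.
  destruct w as [Tm Tp]. unfold bal; simpl. intro HL. unfold eta; simpl.
  rewrite <- (canc_compw _ _ s (fr_canc _)). rewrite compw_app.
  set (x := compw (gamma Tm) s).
  assert (Hx : locate (vine (carets Tm) Lf) x = locate Tm s) by (apply actw_spec, gamma_spec).
  unfold sem; simpl. rewrite <- Hx.
  set (y := compw (inv_word (gamma Tp)) x).
  assert (Ex : x = compw (gamma Tp) y) by (unfold y; rewrite compw_inv'; reflexivity).
  replace (carets Tm) with (carets Tp) by (rewrite !leaves_carets in HL; lia).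
  replace (locate (vine (carets Tp) Lf) x) with (locate Tp y) by (rewrite Ex; symmetry; apply actw_spec, gamma_spec).
  rewrite place_locate. reflexivity.
Qed.

Lemma eval_eta w : elt w -> evw one (eta w) = w.
Proof. intro Hw. destruct (evw_spec (eta w) one elt_one) as [E1 E2].
  apply uniq; auto. intro s. rewrite E2, sem_one. apply eta_sem, elt_bal; auto. Qed.

Definition hom := clos_refl_sym_trans (list treepair) backtrack.

Lemma backtrack_ctx l1 l2 p q : backtrack p q -> backtrack (l1 ++ p ++ l2) (l1 ++ q ++ l2).
Proof. intros [m1 [m2 [u [v [H [-> ->]]]]]]. exists (l1 ++ m1), (m2 ++ l2), u, v. split; auto.
  rewrite <- !app_assoc. simpl. auto. Qed.

Lemma hom_ctx l1 l2 p q : hom p q -> hom (l1 ++ p ++ l2) (l1 ++ q ++ l2).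
Proof. induction 1.
  - apply rst_step, backtrack_ctx; auto.
  - apply rst_refl.
  - apply rst_sym; auto.
  - eapply rst_trans; eauto. Qed.

Fixpoint pre (v : treepair) (u : word) : list treepair :=
  match u with [] => [] | l :: u' => v :: pre (mul v (letter_elt l)) u' end.

Lemma walk_pre u : forall v, walk v u = pre v u ++ [evw v u].
Proof. induction u as [|l u IH]; intro v; simpl; auto. rewrite IH. reflexivity. Qed.

Lemma walk_app u : forall v u', walk v (u ++ u') = pre v u ++ walk (evw v u) u'.
Proof. induction u as [|l u IH]; intros v u'; simpl; auto. rewrite IH. reflexivity. Qed.

Lemma evw_app u u' v : evw v (u ++ u') = evw (evw v u) u'.
Proof. unfold evw. apply fold_left_app. Qed.

Lemma mul_inv z l : elt z -> mul (mul z (letter_elt l)) (letter_elt (letter_inv l)) = z.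
Proof. intro Hz.
  destruct (mul_spec z (letter_elt l) (elt_bal _ Hz) (letter_bal l)) as [E1 E2].
  destruct (mul_spec _ (letter_elt (letter_inv l)) (elt_bal _ E1) (letter_bal _)) as [F1 F2].
  apply uniq; auto. intro s. rewrite F2, E2, sem_letter_inv. reflexivity. Qed.

Lemma canc_hom v u u' : elt v -> canc u u' -> hom (walk v u) (walk v u').
Proof. intros Hv [u1 u2 l]. rewrite !walk_app.
  set (z := evw v u1). assert (Hz : elt z) by (apply evw_spec; auto).
  simpl. rewrite mul_inv by auto.
  assert (Hr : exists rest, walk z u2 = z :: rest) by (destruct u2; eexists; reflexivity).
  destruct Hr as [rest ->].
  apply rst_step. exists (pre v u1), rest, z, (mul z (letter_elt l)). split.
  - exists l; auto.
  - split; reflexivity.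
Qed.

Lemma canc_star_hom v u u' : elt v -> clos_refl_trans _ canc u u' -> hom (walk v u) (walk v u').
Proof. intros Hv H. induction H. apply canc_hom; auto. apply rst_refl. eapply rst_trans; eauto. Qed.

Lemma palin u : forall v, hom (pre v u ++ [evw v u] ++ rev (pre v u)) [v].
Proof. induction u as [|l u IH]; intro v; simpl. apply rst_refl.
  set (v1 := mul v (letter_elt l)).
  apply rst_trans with ([v] ++ [v1] ++ [v]).
  - replace (v :: pre v1 u ++ evw v1 u :: rev (pre v1 u) ++ [v]) with ([v] ++ (pre v1 u ++ [evw v1 u] ++ rev (pre v1 u)) ++ [v])
      by (simpl; rewrite <- !app_assoc; reflexivity).
    change (hom ([v] ++ (pre v1 u ++ [evw v1 u] ++ rev (pre v1 u)) ++ [v]) ([v] ++ [v1] ++ [v])).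
    apply hom_ctx. apply IH.
  - apply rst_step. exists [], [], v, v1. split; [exists l; auto|split; reflexivity].
Qed.

Lemma good_from_eq w : elt w ->
  eta (mul w (letter_elt (g0, false))) = free_reduce (eta w ++ [x0i]) -> good_edge w g0.
Proof.
  intros Hw Heq. unfold good_edge. cbv zeta.
  set (w' := mul w (letter_elt (g0, false))).
  assert (Hw' : elt w') by (apply mul_spec; [apply elt_bal; auto| apply letter_bal]).
  unfold Psi. rewrite !walk_last, !eval_eta by auto. split; auto. split; auto.
  fold w' in Heq.
  rewrite (walk_pre (eta w')), eval_eta by auto.
  rewrite rev_app_distr. simpl.
  replace (walk one (eta w) ++ w' :: rev (pre one (eta w'))) with (walk one (eta w ++ [x0i]) ++ rev (pre one (eta w'))).
  2:{ rewrite walk_app. rewrite (walk_pre (eta w)), eval_eta by auto. rewrite <- !app_assoc. simpl. reflexivity. }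
  unfold nullhomotopic.
  replace (hd one (walk one (eta w ++ [x0i]) ++ rev (pre one (eta w')))) with one by (destruct (eta w); reflexivity).
  apply rst_trans with (walk one (eta w') ++ rev (pre one (eta w'))).
  - apply (hom_ctx [] (rev (pre one (eta w')))). rewrite Heq. apply canc_star_hom; [apply elt_one|apply fr_canc].
  - rewrite walk_pre, eval_eta by auto. rewrite <- app_assoc.
    pose proof (palin (eta w') one) as P. rewrite eval_eta in P by auto. exact P.
Qed.

Fixpoint red_acc (acc : word) : Prop :=
  match acc with
  | x :: ((y :: _) as r) => letter_eqb y (letter_inv x) = false /\ red_acc r
  | _ => True
  end.

Lemma letter_eqb_refl a : letter_eqb a a = true.
Proof. destruct a as [[|] [|]]; reflexivity. Qed.

Lemma letter_eqb_false a b : letter_eqb a b = false -> a <> b.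
Proof. intros H E; subst; rewrite letter_eqb_refl in H; discriminate. Qed.

Lemma fred_step_red acc x : red_acc acc -> red_acc (fred_step acc x).
Proof. destruct acc as [|y acc']; simpl; auto. intro H.
  destruct (letter_eqb y (letter_inv x)) eqn:E.
  - destruct acc'; simpl in *; tauto.
  - simpl. split; auto. Qed.

Lemma fold_red u : forall acc, red_acc acc -> red_acc (fold_left fred_step u acc).
Proof. induction u; intros acc H; simpl; auto. apply IHu, fred_step_red; auto. Qed.

Lemma fold_cancel acc l : red_acc acc -> fold_left fred_step [l; letter_inv l] acc = acc.
Proof. intro H. simpl. destruct acc as [|y r]; simpl.
  - rewrite letter_inv_inv, letter_eqb_refl. reflexivity.
  - destruct (letter_eqb y (letter_inv l)) eqn:E.
    + apply letter_eqb_eq in E. subst y. destruct r as [|z r']; simpl; auto.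
      simpl in H. destruct H as [H1 _]. rewrite letter_inv_inv in H1. rewrite letter_inv_inv, H1. reflexivity.
    + simpl. rewrite letter_inv_inv, letter_eqb_refl. reflexivity.
Qed.

Lemma FR1 u l v : free_reduce (u ++ [l; letter_inv l] ++ v) = free_reduce (u ++ v).
Proof. unfold free_reduce. rewrite !fold_left_app. f_equal. f_equal.
  apply fold_cancel, fold_red. simpl; auto. Qed.

Lemma red_acc_tail x r : red_acc (x :: r) -> red_acc r.
Proof. destruct r; simpl; tauto. Qed.

Lemma fold_rev_red A1 : forall A2, red_acc (A1 ++ A2) -> fold_left fred_step (rev A1) A2 = A1 ++ A2.
Proof. induction A1 as [|a A1 IH]; intros A2 H; simpl; auto.
  rewrite fold_left_app. rewrite IH by (eapply red_acc_tail; eauto). simpl.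
  destruct (A1 ++ A2) as [|y r] eqn:E; simpl; auto.
  change (red_acc (a :: (A1 ++ A2))) in H. rewrite E in H. simpl in H. destruct H as [H _]. rewrite H. reflexivity. Qed.

Lemma FR2 u v : free_reduce (free_reduce u ++ v) = free_reduce (u ++ v).
Proof. unfold free_reduce. rewrite !fold_left_app. f_equal. f_equal.
  pose proof (fold_rev_red (fold_left fred_step u []) []) as K. rewrite app_nil_r in K.
  apply K. apply fold_red. simpl; auto. Qed.

Lemma exposed_Nd_sub X Y k i : In i (exposed X k) \/ In i (exposed Y (k + leaves X)) -> In i (exposed (Nd X Y) k).
Proof. intro H. destruct (tree_eq_dec X Lf); destruct (tree_eq_dec Y Lf); subst.
  - simpl in H; tauto.
  - rewrite exposed_Nd by auto. apply in_or_app; auto.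
  - rewrite exposed_Nd by auto. apply in_or_app; auto.
  - rewrite exposed_Nd by auto. apply in_or_app; auto. Qed.

Lemma exposed_Nd_inv X Y k i : In i (exposed (Nd X Y) k) ->
  (X = Lf /\ Y = Lf /\ i = k) \/ In i (exposed X k) \/ In i (exposed Y (k + leaves X)).
Proof. intro H. destruct (tree_eq_dec X Lf); destruct (tree_eq_dec Y Lf); subst.
  - simpl in H. destruct H as [->|[]]. auto.
  - rewrite exposed_Nd in H by auto. apply in_app_or in H. tauto.
  - rewrite exposed_Nd in H by auto. apply in_app_or in H. tauto.
  - rewrite exposed_Nd in H by auto. apply in_app_or in H. tauto. Qed.

Lemma exposed_shift t : forall k i, In i (exposed t k) -> In (S i) (exposed t (S k)).
Proof. induction t as [|a IHa b IHb]; intros k i H. simpl in H; tauto.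
  apply exposed_Nd_inv in H. destruct H as [[-> [-> ->]]|[H|H]].
  - simpl; auto.
  - apply exposed_Nd_sub. left. auto.
  - apply exposed_Nd_sub. right. apply IHb in H. simpl in H. auto. Qed.

Lemma nocommon_reduced p : (forall i, In i (exposed (fst p) 0) -> In i (exposed (snd p) 0) -> False) -> is_reduced p = true.
Proof. intro H. unfold is_reduced. destruct (common_caret p) eqn:E; auto.
  apply common_caret_some in E. exfalso. apply (H n); tauto. Qed.

Fixpoint addlast (t : tree) : tree := match t with Lf => Nd Lf Lf | Nd a b => Nd a (addlast b) end.
Fixpoint addfirst (t : tree) : tree := match t with Lf => Nd Lf Lf | Nd a b => Nd (addfirst a) b end.

Lemma leaves_addlast t : leaves (addlast t) = S (leaves t).
Proof. induction t; simpl; lia. Qed.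
Lemma leaves_addfirst t : leaves (addfirst t) = S (leaves t).
Proof. induction t; simpl; lia. Qed.

Lemma exposed_addlast t : forall base i, In i (exposed (addlast t) base) ->
  In i (exposed t base) \/ i = base + leaves t - 1.
Proof. induction t as [|a IHa b IHb]; intros base i H.
  - simpl in H. destruct H as [->|[]]. right. simpl. lia.
  - change (addlast (Nd a b)) with (Nd a (addlast b)) in H. rewrite exposed_Nd in H by (right; destruct b; discriminate). apply in_app_or in H.
    destruct H as [H|H].
    + left. apply exposed_Nd_sub; auto.
    + apply IHb in H. destruct H as [H|H].
      * left. apply exposed_Nd_sub; auto.
      * right. simpl. pose proof (leaves_pos b). lia.
Qed.

Lemma exposed_addfirst t : forall base i, In i (exposed t base) -> i <> base ->
  In (S i) (exposed (addfirst t) base).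
Proof. induction t as [|a IHa b IHb]; intros base i H Hi. simpl in H; tauto.
  change (addfirst (Nd a b)) with (Nd (addfirst a) b). rewrite exposed_Nd by (left; destruct a; discriminate). apply in_or_app.
  apply exposed_Nd_inv in H. destruct H as [[_ [_ E]]|[H|H]]; [congruence| |].
  - left. apply IHa; auto.
  - right. rewrite leaves_addfirst. replace (base + S (leaves a)) with (S (base + leaves a)) by lia.
    apply exposed_shift; auto. Qed.

Lemma exposed_first t : forall base, In base (exposed t base) -> exists U, t = addfirst U.
Proof. induction t as [|a IHa b IHb]; intros base H. simpl in H; tauto.
  apply exposed_Nd_inv in H. destruct H as [[-> [-> _]]|[H|H]].
  - exists Lf; reflexivity.
  - destruct (IHa _ H) as [U ->]. exists (Nd U b). reflexivity.
  - apply exposed_bounds in H. pose proof (leaves_pos a). lia. Qed.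

Lemma place_addlast1 t i r : i < leaves t - 1 -> place (addlast t) i r = place t i r.
Proof. revert i; induction t as [|a IHa b IHb]; intros i H; simpl in *. lia.
  destruct (i <? leaves a) eqn:E; auto. apply Nat.ltb_ge in E. rewrite IHb by lia. reflexivity. Qed.

Lemma place_addlast2 t r : place (addlast t) (leaves t - 1) r = place t (leaves t - 1) (scons false r).
Proof. induction t as [|a IHa b IHb]; simpl. reflexivity. pose proof (leaves_pos b).
  replace (leaves a + leaves b - 1 <? leaves a) with false by (symmetry; apply Nat.ltb_ge; lia).
  replace (leaves a + leaves b - 1 - leaves a) with (leaves b - 1) by lia. rewrite IHb. reflexivity. Qed.

Lemma place_addlast3 t r : place (addlast t) (leaves t) r = place t (leaves t - 1) (scons true r).
Proof. induction t as [|a IHa b IHb]; simpl. reflexivity. pose proof (leaves_pos b).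
  replace (leaves a + leaves b <? leaves a) with false by (symmetry; apply Nat.ltb_ge; lia).
  replace (leaves a + leaves b - 1 <? leaves a) with false by (symmetry; apply Nat.ltb_ge; lia).
  replace (leaves a + leaves b - 1 - leaves a) with (leaves b - 1) by lia.
  replace (leaves a + leaves b - leaves a) with (leaves b) by lia. rewrite IHb. reflexivity. Qed.

Lemma place_addfirst0 t r : place (addfirst t) 0 r = place t 0 (scons false r).
Proof. induction t as [|a IHa b IHb]; simpl. reflexivity. rewrite leaves_addfirst. simpl.
  pose proof (leaves_pos a). replace (0 <? leaves a) with true by (symmetry; apply Nat.ltb_lt; lia).
  rewrite IHa. reflexivity. Qed.

Lemma place_addfirst1 t r : place (addfirst t) 1 r = place t 0 (scons true r).
Proof. induction t as [|a IHa b IHb]; simpl. reflexivity. rewrite leaves_addfirst. simpl.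
  pose proof (leaves_pos a). replace (0 <? leaves a) with true by (symmetry; apply Nat.ltb_lt; lia).
  destruct (leaves a) eqn:E; [lia|]. simpl. rewrite IHa. reflexivity. Qed.

Lemma place_addfirstS t i r : 1 <= i -> i < leaves t -> place (addfirst t) (S i) r = place t i r.
Proof. revert i; induction t as [|a IHa b IHb]; intros i H1 H2; simpl in *. lia.
  rewrite leaves_addfirst. destruct (i <? leaves a) eqn:E.
  - apply Nat.ltb_lt in E. replace (S i <? S (leaves a)) with true by (symmetry; apply Nat.ltb_lt; lia).
    rewrite IHa; auto.
  - apply Nat.ltb_ge in E. replace (S i <? S (leaves a)) with false by (symmetry; apply Nat.ltb_ge; lia).
    reflexivity. Qed.

Lemma has_int_addlast t : has_interior_R (addlast t) = has_interior_R t.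
Proof. induction t as [|a IHa b IHb]; simpl; auto. destruct a; simpl; auto. Qed.

Lemma trav_right_addlast t : trav_right (addlast t) = trav_right t.
Proof. induction t as [|a IHa b IHb]; simpl; auto. rewrite has_int_addlast, IHb. reflexivity. Qed.

Lemma gamma_addlast t : t <> Lf -> gamma (addlast t) = gamma t.
Proof. destruct t as [|a b]; [congruence|]. intros _. simpl. rewrite trav_right_addlast. reflexivity. Qed.

Definition mA (a : tree) : word := match a with Lf => [] | _ => [x0i] end.

Lemma trav_left_Nd a b : trav_left (Nd a b) = trav_left a ++ mA a ++ trav_int b.
Proof. reflexivity. Qed.

Lemma gamma_Nd a b : gamma (Nd a b) = trav_left a ++ mA a ++ trav_right b.
Proof. reflexivity. Qed.

Lemma mA_addfirst a : mA (addfirst a) = [x0i].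
Proof. destruct a; reflexivity. Qed.

Lemma trav_left_addfirst a : trav_left (addfirst a) ++ [x0i] = x0i :: trav_left a ++ mA a.
Proof. induction a as [|a1 IH1 a2 IH2]; [reflexivity|].
  simpl addfirst. rewrite !trav_left_Nd, mA_addfirst. simpl mA.
  rewrite <- !app_assoc. rewrite app_assoc, IH1. simpl. rewrite <- !app_assoc. reflexivity. Qed.

Lemma gamma_addfirst U : U <> Lf -> gamma (addfirst U) = x0i :: gamma U.
Proof. destruct U as [|a b]; [congruence|]. intros _. simpl addfirst. rewrite !gamma_Nd, mA_addfirst.
  rewrite app_assoc, trav_left_addfirst. simpl. rewrite <- app_assoc. reflexivity. Qed.

Lemma has_int_vine k : has_interior_R (vine k Lf) = false.
Proof. induction k; simpl; auto. Qed.

Lemma trav_right_vine k : trav_right (vine k Lf) = [].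
Proof. destruct k; simpl; auto. rewrite has_int_vine. reflexivity. Qed.

Lemma trav_right_noint C : has_interior_R C = false -> trav_right C = [].
Proof. intro H. rewrite (has_int_false C H). apply trav_right_vine. Qed.

Lemma mul_is w c : elt w -> elt c -> (forall s, sem c s = sem w (sem (letter_elt x0i) s)) ->
  mul w (letter_elt x0i) = c.
Proof. intros Hw Hc H. destruct (mul_spec w (letter_elt x0i) (elt_bal _ Hw) (letter_bal _)) as [E1 E2].
  apply uniq; auto. intro s. rewrite E2, H. reflexivity. Qed.

Lemma eta_target w : free_reduce (eta w ++ [x0i]) = free_reduce (inv_word (gamma (snd w)) ++ gamma (fst w) ++ [x0i]).
Proof. unfold eta. rewrite FR2. rewrite app_assoc. reflexivity. Qed.

Lemma inv_word_cons l u : inv_word (l :: u) = inv_word u ++ [letter_inv l].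
Proof. reflexivity. Qed.

Lemma FR1_end u l : free_reduce (u ++ [l; letter_inv l]) = free_reduce u.
Proof. pose proof (FR1 u l []) as H. rewrite !app_nil_r in H. exact H. Qed.

Lemma case_one : eta (mul one (letter_elt x0i)) = free_reduce (eta one ++ [x0i]).
Proof. vm_compute. reflexivity. Qed.

Definition wx0 : treepair := (Nd Lf (Nd Lf Lf), Nd (Nd Lf Lf) Lf).
Lemma case_x0 : eta (mul wx0 (letter_elt x0i)) = free_reduce (eta wx0 ++ [x0i]).
Proof. vm_compute. reflexivity. Qed.

Lemma case1 A B C Tp : elt (Nd A (Nd B C), Tp) -> ~ (A = Lf /\ B = Lf /\ In 0 (exposed Tp 0)) ->
  eta (mul (Nd A (Nd B C), Tp) (letter_elt x0i)) = free_reduce (eta (Nd A (Nd B C), Tp) ++ [x0i]).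
Proof.
  intros Hw Hn. pose proof Hw as [HL HR]. simpl in HL.
  rewrite (mul_is _ (Nd (Nd A B) C, Tp) Hw).
  - rewrite eta_target. unfold eta; simpl fst; simpl snd.
    assert (G : gamma (Nd A (Nd B C)) ++ [x0i] = gamma (Nd (Nd A B) C) ++ (if has_interior_R C then [x0; x0i] else [])).
    { rewrite !gamma_Nd, trav_left_Nd. simpl trav_right. destruct (has_interior_R C) eqn:E.
      - rewrite <- !app_assoc. simpl. rewrite <- !app_assoc. reflexivity.
      - rewrite trav_right_noint by auto. rewrite <- !app_assoc. simpl. rewrite ?app_nil_r. reflexivity. }
    rewrite G. destruct (has_interior_R C).
    + rewrite app_assoc. symmetry. apply (FR1_end _ x0).
    + rewrite app_nil_r. reflexivity.
  - split; [simpl; lia|]. apply nocommon_reduced. intros i H1 H2. cbn [fst snd] in H1, H2.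
    apply (reduced_nocommon _ HR i); auto. cbn [fst].
    apply exposed_Nd_inv in H1. destruct H1 as [[E _]|[H1|H1]]; [discriminate| |].
    + apply exposed_Nd_inv in H1. destruct H1 as [[-> [-> ->]]|[H1|H1]]; [tauto| |].
      * apply exposed_Nd_sub; auto.
      * apply exposed_Nd_sub; right. apply exposed_Nd_sub; auto.
    + apply exposed_Nd_sub; right. apply exposed_Nd_sub; right. simpl in H1.
      replace (0 + leaves A + leaves B) with (0 + (leaves A + leaves B)) by lia. auto.
  - intro s. unfold sem at 1 2. cbn [fst snd]. rewrite (rot0i_spec (Nd A (Nd B C)) (Nd (Nd A B) C) s); reflexivity.
Qed.

Lemma leaves2 t : leaves t = 2 -> t = Nd Lf Lf.
Proof. destruct t as [|a b]; simpl; intro H; [lia|].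
  pose proof (leaves_pos a); pose proof (leaves_pos b).
  destruct a as [|a1 a2]; [destruct b as [|b1 b2]; [auto|]|]; simpl in *.
  - pose proof (leaves_pos b1); pose proof (leaves_pos b2); lia.
  - pose proof (leaves_pos a1); pose proof (leaves_pos a2); lia. Qed.

Lemma case2 A Tp : elt (Nd A Lf, Tp) ->
  eta (mul (Nd A Lf, Tp) (letter_elt x0i)) = free_reduce (eta (Nd A Lf, Tp) ++ [x0i]).
Proof.
  intros Hw. pose proof Hw as [HL HR]. simpl in HL.
  assert (HA : A <> Lf).
  { intro; subst. assert (Tp = Nd Lf Lf).
    { apply leaves2. simpl in HL. lia. }
    subst. discriminate HR. }
  assert (HT : Tp <> Lf) by (intro; subst; simpl in HL; pose proof (leaves_pos A); lia).
  rewrite (mul_is _ (Nd (Nd A Lf) Lf, addlast Tp) Hw).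
  - rewrite eta_target. unfold eta; cbn [fst snd].
    rewrite gamma_addlast by auto.
    assert (G : gamma (Nd (Nd A Lf) Lf) = gamma (Nd A Lf) ++ [x0i]).
    { rewrite !gamma_Nd, trav_left_Nd. simpl mA. simpl trav_right. simpl trav_int.
      rewrite ?app_nil_r. destruct A; [congruence|]. simpl mA. rewrite <- !app_assoc. reflexivity. }
    rewrite G, app_assoc. reflexivity.
  - split; [simpl; rewrite leaves_addlast; lia|]. apply nocommon_reduced. intros i H1 H2. cbn [fst snd] in H1, H2.
    apply exposed_Nd_inv in H1. destruct H1 as [[E _]|[H1|H1]]; [discriminate| |simpl in H1; tauto].
    apply exposed_Nd_inv in H1. destruct H1 as [[E _]|[H1|H1]]; [congruence| |simpl in H1; tauto].
    pose proof (exposed_bounds _ _ _ H1).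
    apply exposed_addlast in H2. destruct H2 as [H2|H2]; [|lia].
    apply (reduced_nocommon _ HR i); auto. cbn [fst]. apply exposed_Nd_sub; auto.
  - intro s. rewrite (s3 s). generalize (s 0) (s 1) (s 2) (stl (stl (stl s))). intros b0 b1 b2 r.
    unfold sem at 1 2. cbn [fst snd].
    destruct b0, b1; unfold sem; simpl; rewrite ?stl_scons.
    + rewrite Nat.add_0_r. replace (leaves A + 1) with (leaves Tp) by lia. rewrite place_addlast3.
      replace (leaves Tp - 1) with (leaves A + 0) by lia. reflexivity.
    + rewrite Nat.add_0_r. replace (leaves A + 1) with (leaves Tp) by lia. rewrite place_addlast3.
      replace (leaves Tp - 1) with (leaves A + 0) by lia. reflexivity.
    + rewrite Nat.add_0_r. replace (leaves A) with (leaves Tp - 1) by lia. rewrite place_addlast2. reflexivity.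
    + rewrite place_addlast1; auto. pose proof (locate_lt A (scons b2 r)). lia.
Qed.

Lemma special U C : C <> Lf -> elt (Nd Lf (Nd Lf C), addfirst U) ->
  eta (mul (Nd Lf (Nd Lf C), addfirst U) (letter_elt x0i)) = free_reduce (eta (Nd Lf (Nd Lf C), addfirst U) ++ [x0i]).
Proof.
  intros HC Hw. pose proof Hw as [HL HR]. simpl in HL. rewrite leaves_addfirst in HL.
  assert (HU : U <> Lf) by (intro; subst; simpl in HL; pose proof (leaves_pos C); destruct C; [congruence|simpl in HL; pose proof (leaves_pos C1); lia]).
  rewrite (mul_is _ (Nd Lf C, U) Hw).
  - rewrite eta_target. unfold eta; cbn [fst snd].
    rewrite gamma_addfirst by auto. rewrite inv_word_cons.
    assert (GT : gamma (Nd Lf (Nd Lf C)) = if has_interior_R C then [x0i] ++ trav_right C ++ [x0] else []) by reflexivity.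
    change (gamma (Nd Lf C)) with (trav_right C).
    rewrite GT. change (letter_inv x0i) with x0. destruct (has_interior_R C) eqn:E.
    + replace ((inv_word (gamma U) ++ [x0]) ++ ([x0i] ++ trav_right C ++ [x0]) ++ [x0i])
        with (inv_word (gamma U) ++ [x0; letter_inv x0] ++ ((trav_right C) ++ [x0; letter_inv x0]))
        by (simpl; rewrite <- !app_assoc; reflexivity).
      rewrite FR1. rewrite app_assoc. symmetry. apply FR1_end.
    + rewrite trav_right_noint by auto. rewrite app_nil_r.
      replace ((inv_word (gamma U) ++ [x0]) ++ [] ++ [x0i]) with (inv_word (gamma U) ++ [x0; letter_inv x0]) by (rewrite <- app_assoc; reflexivity).
      symmetry. apply FR1_end.
  - split; [simpl; lia|]. apply nocommon_reduced. intros i H1 H2. cbn [fst snd] in H1, H2.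
    apply exposed_Nd_inv in H1. destruct H1 as [[_ [E _]]|[H1|H1]]; [congruence|simpl in H1; tauto|].
    simpl in H1. pose proof (exposed_bounds _ _ _ H1).
    apply (reduced_nocommon _ HR (S i)); cbn [fst snd].
    + apply exposed_Nd_sub. right. change (0 + leaves Lf) with 1. apply exposed_Nd_sub. right.
      change (1 + leaves Lf) with 2. apply exposed_shift in H1. auto.
    + apply exposed_addfirst; auto. lia.
  - intro s. unfold sem at 2. cbn [fst snd].
    rewrite (rot0i_spec (Nd Lf (Nd Lf C)) (Nd (Nd Lf Lf) C) s) by reflexivity.
    rewrite (s3 s). generalize (s 0) (s 1) (s 2) (stl (stl (stl s))). intros b0 b1 b2 r.
    destruct b0; [|destruct b1]; unfold sem; simpl; rewrite ?stl_scons.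
    + pose proof (locate_lt C (scons b1 (scons b2 r))).
      rewrite place_addfirstS by lia. reflexivity.
    + rewrite place_addfirst1. reflexivity.
    + rewrite place_addfirst0. reflexivity.
Qed.

Lemma leaves1 t : leaves t = 1 -> t = Lf.
Proof. destruct t as [|a b]; simpl; auto. pose proof (leaves_pos a); pose proof (leaves_pos b); lia. Qed.

Theorem lemma4p4 : forall w : treepair, is_elt w -> good_edge w g0.
Proof.
  intros w Hw. apply is_elt_elt in Hw. apply good_from_eq; auto.
  change (eta (mul w (letter_elt x0i)) = free_reduce (eta w ++ [x0i])).
  destruct w as [Tm Tp]. pose proof Hw as [HL HR]. simpl in HL.
  destruct Tm as [|A R].
  - assert (Tp = Lf) by (apply leaves1; simpl in HL; lia). subst. apply case_one.
  - destruct R as [|B C].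
    + apply case2; auto.
    + destruct (tree_eq_dec A Lf) as [HA|HA]; [destruct (tree_eq_dec B Lf) as [HB|HB]|].
      * subst. destruct (in_dec Nat.eq_dec 0 (exposed Tp 0)) as [H0|H0].
        -- destruct (exposed_first _ _ H0) as [U ->].
           destruct (tree_eq_dec C Lf) as [HC|HC].
           ++ subst. simpl in HL. rewrite leaves_addfirst in HL.
              assert (U = Nd Lf Lf) by (apply leaves2; lia). subst. apply case_x0.
           ++ apply special; auto.
        -- apply case1; auto. tauto.
      * apply case1; auto. tauto.
      * apply case1; auto. tauto.
Qed.
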